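(* For every $k,\ell\ge1$, $\mathsf{RT}^2_{k,\ell}\le_c\mathsf{DT}^2_{2k,2\ell+1}$.
   Context: $\mathsf{RT}^2_{k,\ell}$: instances are colorings $f:[\mathbb N]^2\to k$; solutions are infinite sets $H\subseteq\mathbb N$ with $|f([H]^2)|\le\ell$. $\mathsf{DT}^2_{k,\ell}$: instances are colorings $f:[\mathbb Q]^2\to k$ (with $\mathbb Q$ computably presented); solutions are sets $S\subseteq\mathbb Q$ such that $(S,<)$ is a dense linear order without endpoints and $|f([S]^2)|\le\ell$. Computable reducibility: a problem $\mathsf Q$ is computably reducible to $\mathsf P$, written $\mathsf Q\le_c\mathsf P$, if every $\mathsf Q$-instance $X$ computes a $\mathsf P$-instance $\widehat X$ such that for every $\mathsf P$-solution $\widehat Y$ to $\widehat X$, $X\oplus\widehat Y$ computes a $\mathsf Q$-solution to $X$. *)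

(* Defs.v *)
From Stdlib Require Import Arith List ZArith QArith Cantor.
Import ListNotations.
Local Open Scope nat_scope.

Inductive prog : Type :=
| PZero : prog
| PSucc : prog
| PProj : nat -> prog                   (* i-th argument (0 if absent) *)
| POracle : prog
| PComp : prog -> list prog -> prog
| PPrim : prog -> prog -> prog          (* primitive recursion on x0 *)
| PMu : prog -> prog.

Inductive eval (o : nat -> nat) : prog -> list nat -> nat -> Prop :=
| eZero xs : eval o PZero xs 0
| eSucc xs : eval o PSucc xs (S (hd 0 xs))
| eProj i xs : eval o (PProj i) xs (nth i xs 0)
| eOracle xs : eval o POracle xs (o (hd 0 xs))
| eComp f gs xs ys y :
    evals o gs xs ys -> eval o f ys y -> eval o (PComp f gs) xs y
| ePrim0 b s xs y : eval o b xs y -> eval o (PPrim b s) (0 :: xs) y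
| ePrimS b s n xs r y :
    eval o (PPrim b s) (n :: xs) r -> eval o s (n :: r :: xs) y ->
    eval o (PPrim b s) (S n :: xs) y
| eMu f xs n :
    eval o f (n :: xs) 0 ->
    (forall m, m < n -> exists v, v <> 0 /\ eval o f (m :: xs) v) ->
    eval o (PMu f) xs n
with evals (o : nat -> nat) : list prog -> list nat -> list nat -> Prop :=
| esNil xs : evals o [] xs []
| esCons g gs xs y ys :
    eval o g xs y -> evals o gs xs ys -> evals o (g :: gs) xs (y :: ys).

(** [o] computes [g] (i.e. g <=_T o). *)
Definition computes (o g : nat -> nat) : Prop :=
  exists e : prog, forall n, eval o e [n] (g n).

Definition join (X Y : nat -> nat) : nat -> nat :=
  fun n => if Nat.even n then X (Nat.div2 n) else Y (Nat.div2 n).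

Definition chi (S : nat -> bool) : nat -> nat := fun n => if S n then 1 else 0.

Definition oracle2 (f : nat -> nat -> nat) : nat -> nat :=
  fun n => f (fst (Cantor.of_nat n)) (snd (Cantor.of_nat n)).

(** * Computable presentation of Q
   The code n, with (a,b) = Cantor.of_nat n, denotes the fraction
   zdec a / (b+1) where zdec : nat -> Z is the standard bijection
   0,1,2,3,4,.. |-> 0,-1,1,-2,2,...; codes are valid when the fraction is in
   lowest terms, so valid codes are in bijection with Q. *)
Definition zdec (a : nat) : Z :=
  if Nat.even a then Z.of_nat (Nat.div2 a) else (- Z.of_nat (Nat.div2 (S a)))%Z.

Definition qnum (n : nat) : Z := zdec (fst (Cantor.of_nat n)).
Definition qden (n : nat) : positive := Pos.of_succ_nat (snd (Cantor.of_nat n)).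

Definition qcode (n : nat) : Prop := Z.gcd (qnum n) (Z.pos (qden n)) = 1%Z.
Definition qval (n : nat) : Q := Qmake (qnum n) (qden n).
Definition qlt (i j : nat) : Prop := Qlt (qval i) (qval j).

(** RT^2_{k,l}-instance: f : [N]^2 -> k, where f x y (x < y) is the color of {x,y}. *)
Definition RT_instance (k : nat) (f : nat -> nat -> nat) : Prop :=
  forall x y, x < y -> f x y < k.

Definition infinite_set (H : nat -> bool) : Prop :=
  forall n, exists m, n <= m /\ H m = true.

Definition RT_solution (l : nat) (f : nat -> nat -> nat) (H : nat -> bool) : Prop :=
  infinite_set H /\
  exists cols : list nat, length cols <= l /\
    forall x y, x < y -> H x = true -> H y = true -> In (f x y) cols.

(** DT^2_{k,l}-instance: coloring of unordered pairs of rationals (given by codes);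
    the color of {i,j} for codes i < j (as naturals) is g i j. *)
Definition DT_instance (k : nat) (g : nat -> nat -> nat) : Prop :=
  forall i j, qcode i -> qcode j -> i < j -> g i j < k.

Definition dense_no_endpoints (S : nat -> bool) : Prop :=
  (forall i, S i = true -> qcode i) /\
  (exists i, S i = true) /\
  (forall i j, S i = true -> S j = true -> qlt i j ->
     exists m, S m = true /\ qlt i m /\ qlt m j) /\
  (forall i, S i = true ->
     exists a b, S a = true /\ S b = true /\ qlt a i /\ qlt i b).

Definition DT_solution (l : nat) (g : nat -> nat -> nat) (S : nat -> bool) : Prop :=
  dense_no_endpoints S /\
  exists cols : list nat, length cols <= l /\
    forall i j, i < j -> S i = true -> S j = true -> In (g i j) cols.

Definition RT_le_c_DT (k l k' l' : nat) : Prop :=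
  forall f, RT_instance k f ->
    exists g, DT_instance k' g /\ computes (oracle2 f) (oracle2 g) /\
      forall S, DT_solution l' g S ->
        exists H, RT_solution l f H /\ computes (join (oracle2 f) (chi S)) (chi H).

(* Main.v *)
Require Import Defs.
From Stdlib Require Import Arith List ZArith QArith Cantor Lia Classical ClassicalEpsilon.
Import ListNotations.
Local Open Scope nat_scope.

Definition rep (o : nat -> nat) (e : prog) (F : list nat -> nat) : Prop :=
  forall xs, eval o e xs (F xs).

Lemma rep_zero o : rep o PZero (fun _ => 0).
Proof. intros xs; constructor. Qed.
Lemma rep_succ o : rep o PSucc (fun xs => S (hd 0 xs)).
Proof. intros xs; constructor. Qed.
Lemma rep_proj o i : rep o (PProj i) (fun xs => nth i xs 0).
Proof. intros xs; constructor. Qed.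
Lemma rep_oracle o : rep o POracle (fun xs => o (hd 0 xs)).
Proof. intros xs; constructor. Qed.

Lemma evals_of o gs Gs : Forall2 (rep o) gs Gs ->
  forall xs, evals o gs xs (map (fun G => G xs) Gs).
Proof. induction 1; intros xs; simpl; constructor; auto. Qed.

Lemma rep_comp o f F gs Gs : rep o f F -> Forall2 (rep o) gs Gs ->
  rep o (PComp f gs) (fun xs => F (map (fun G => G xs) Gs)).
Proof. intros Hf Hg xs. econstructor. apply evals_of; eauto. apply Hf. Qed.

Fixpoint primF (B St : list nat -> nat) (n : nat) (xs : list nat) : nat :=
  match n with 0 => B xs | S n' => St (n' :: primF B St n' xs :: xs) end.

Lemma rep_prim o b B s St : rep o b B -> rep o s St ->
  forall n xs, eval o (PPrim b s) (n :: xs) (primF B St n xs).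
Proof. intros Hb Hs n xs; induction n; simpl. constructor; auto.
  econstructor; eauto. Qed.

Lemma rep_compP o b B s St g G gs Gs : rep o b B -> rep o s St -> rep o g G ->
  Forall2 (rep o) gs Gs ->
  rep o (PComp (PPrim b s) (g :: gs))
    (fun xs => primF B St (G xs) (map (fun G => G xs) Gs)).
Proof. intros Hb Hs Hg Hgs xs. econstructor. constructor. apply Hg. apply evals_of; eauto.
  apply rep_prim; auto. Qed.

Lemma rep_ext o e F G : rep o e F -> (forall xs, F xs = G xs) -> rep o e G.
Proof. intros H E xs; rewrite <- E; auto. Qed.

Lemma least_ex (P : nat -> Prop) : (exists n, P n) -> exists n, P n /\ forall m, m < n -> ~ P m.
Proof.
  intros [n Hn]. revert Hn. induction n as [n IH] using (well_founded_induction lt_wf).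
  intros Hn. destruct (classic (exists m, m < n /\ P m)) as [[m [Hm Pm]]|C].
  - apply (IH m Hm Pm).
  - exists n; split; auto. intros m Hm Pm; apply C; eauto.
Qed.

Definition muF (F : list nat -> nat) (xs : list nat) : nat :=
  epsilon (inhabits 0) (fun n => F (n :: xs) = 0 /\ forall m, m < n -> F (m :: xs) <> 0).

Lemma muF_spec F xs : (exists n, F (n :: xs) = 0) ->
  F (muF F xs :: xs) = 0 /\ forall m, m < muF F xs -> F (m :: xs) <> 0.
Proof. intros H. unfold muF. apply epsilon_spec. apply least_ex in H.
  destruct H as [n [H1 H2]]; exists n; split; auto. Qed.

Lemma rep_mu o f F : rep o f F -> (forall xs, exists n, F (n :: xs) = 0) ->
  rep o (PMu f) (muF F).
Proof. intros Hf Hex xs. destruct (muF_spec F xs (Hex xs)) as [H1 H2].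
  constructor. rewrite <- H1; apply Hf. intros m Hm. exists (F (m :: xs)); split; auto. Qed.

Lemma rep_mu_at o f F xs n : rep o f F -> F (n :: xs) = 0 ->
  (forall m, m < n -> F (m :: xs) <> 0) -> eval o (PMu f) xs n.
Proof. intros Hf H1 H2. constructor. rewrite <- H1; apply Hf.
  intros m Hm; exists (F (m :: xs)); split; auto. Qed.

Definition ONE := PComp PSucc [PZero].
Definition ADD := PComp (PPrim (PProj 0) (PComp PSucc [PProj 1])) [PProj 0; PProj 1].
Definition MUL := PComp (PPrim PZero (PComp ADD [PProj 1; PProj 2])) [PProj 0; PProj 1].
Definition PRED := PComp (PPrim PZero (PProj 0)) [PProj 0].
Definition SUB := PComp (PPrim (PProj 0) (PComp PRED [PProj 1])) [PProj 1; PProj 0].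
Definition LTB := PComp SUB [ONE; PComp SUB [ONE; PComp SUB [PProj 1; PProj 0]]].
Definition EQB := PComp SUB [ONE; PComp ADD [PComp SUB [PProj 0; PProj 1]; PComp SUB [PProj 1; PProj 0]]].
Definition TRI := PComp (PPrim PZero (PComp ADD [PComp PSucc [PProj 0]; PProj 1])) [PProj 0].
Definition ODD := PComp (PPrim PZero (PComp SUB [ONE; PProj 1])) [PProj 0].
Definition DIV2 := PComp (PPrim PZero (PComp ADD [PProj 1; PComp ODD [PProj 0]])) [PProj 0].

Ltac b0 := first [ eapply rep_compP | eapply rep_comp | eapply rep_proj | eapply rep_zero
  | eapply rep_succ | eapply rep_oracle | apply Forall2_nil | eapply Forall2_cons ].

Definition a0 xs := nth 0 xs 0.
Definition a1 xs := nth 1 xs 0.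

Lemma rep_ONE o : rep o ONE (fun _ => 1).
Proof. eapply rep_ext. unfold ONE; repeat b0. reflexivity. Qed.

Lemma rep_ADD o : rep o ADD (fun xs => nth 0 xs 0 + nth 1 xs 0).
Proof. eapply rep_ext. unfold ADD; repeat b0. intros xs; simpl.
  generalize (nth 0 xs 0); induction n; simpl; auto. Qed.
Ltac b1 := first [ apply rep_ONE | apply rep_ADD | b0 ].
Lemma rep_MUL o : rep o MUL (fun xs => nth 0 xs 0 * nth 1 xs 0).
Proof. eapply rep_ext. unfold MUL; repeat b1. intros xs; simpl.
  generalize (nth 0 xs 0); induction n; simpl; auto. rewrite IHn; lia. Qed.
Lemma rep_PRED o : rep o PRED (fun xs => pred (nth 0 xs 0)).
Proof. eapply rep_ext. unfold PRED; repeat b1. intros xs; simpl.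
  destruct (nth 0 xs 0); reflexivity. Qed.
Ltac b2 := first [ apply rep_MUL | apply rep_PRED | b1 ].
Lemma rep_SUB o : rep o SUB (fun xs => nth 0 xs 0 - nth 1 xs 0).
Proof. eapply rep_ext. unfold SUB; repeat b2. intros xs; simpl.
  generalize (nth 1 xs 0); induction n; simpl; try lia. Qed.
Ltac b3 := first [ apply rep_SUB | b2 ].
Lemma rep_LTB o : rep o LTB (fun xs => if nth 0 xs 0 <? nth 1 xs 0 then 1 else 0).
Proof. eapply rep_ext. unfold LTB; repeat b3. intros xs; cbn [map nth hd].
  destruct (Nat.ltb_spec (nth 0 xs 0) (nth 1 xs 0)); lia. Qed.
Lemma rep_EQB o : rep o EQB (fun xs => if nth 0 xs 0 =? nth 1 xs 0 then 1 else 0).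
Proof. eapply rep_ext. unfold EQB; repeat b3. intros xs; cbn [map nth hd].
  destruct (Nat.eqb_spec (nth 0 xs 0) (nth 1 xs 0)); lia. Qed.
Fixpoint tri (d : nat) := match d with 0 => 0 | S d' => S d' + tri d' end.
Lemma rep_TRI o : rep o TRI (fun xs => tri (nth 0 xs 0)).
Proof. eapply rep_ext. unfold TRI; repeat b3. intros xs; simpl.
  generalize (nth 0 xs 0); induction n; simpl; auto. Qed.
Lemma rep_ODD o : rep o ODD (fun xs => if Nat.odd (nth 0 xs 0) then 1 else 0).
Proof. eapply rep_ext. unfold ODD; repeat b3. intros xs; simpl.
  generalize (nth 0 xs 0); induction n; simpl; auto. rewrite IHn.
  rewrite Nat.odd_succ, <- Nat.negb_odd. destruct (Nat.odd n); reflexivity. Qed.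
Ltac b4 := first [ apply rep_LTB | apply rep_EQB | apply rep_TRI | apply rep_ODD | b3 ].
Lemma rep_DIV2 o : rep o DIV2 (fun xs => Nat.div2 (nth 0 xs 0)).
Proof. eapply rep_ext. unfold DIV2; repeat b4. intros xs; simpl.
  generalize (nth 0 xs 0); induction n; simpl; auto. rewrite IHn.
  pose proof (Nat.div2_odd n) as E. pose proof (Nat.div2_odd (S n)) as E2.
  rewrite Nat.odd_succ, <- Nat.negb_odd in E2. destruct (Nat.odd n); simpl in *; lia. Qed.
Ltac b5 := first [ apply rep_DIV2 | b4 ].
Definition DIAG := PMu (PComp SUB [ONE; PComp LTB [PProj 1; PComp TRI [PComp PSucc [PProj 0]]]]).
Definition CY := PComp SUB [PProj 0; PComp TRI [DIAG]].
Definition CX := PComp SUB [DIAG; CY].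

Lemma tri_eq d : nat_rec _ 0 (fun i m => S i + m) d = tri d.
Proof. induction d; simpl; auto. Qed.
Lemma tri_mono d d' : d <= d' -> tri d <= tri d'.
Proof. induction 1; simpl; lia. Qed.
Lemma of_nat_eq n : n = snd (of_nat n) + tri (fst (of_nat n) + snd (of_nat n)).
Proof. pose proof (cancel_to_of n) as E. destruct (of_nat n) as [x y]; simpl in *.
  assert (T: forall d, nat_rec (fun _ : nat => nat) 0 (fun i m : nat => S (i + m)) d = tri d)
    by (induction d; simpl; auto).
  rewrite T in E. rewrite (Nat.add_comm x y). lia. Qed.

Lemma rep_DIAG o : rep o DIAG (fun xs => fst (of_nat (nth 0 xs 0)) + snd (of_nat (nth 0 xs 0))).
Proof. intros xs. pose proof (of_nat_eq (nth 0 xs 0)) as E.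
  set (n := nth 0 xs 0) in *. set (x := fst (of_nat n)) in *. set (y := snd (of_nat n)) in *.
  unfold DIAG. eapply rep_mu_at; [ repeat b5 | | ]; cbn [map nth hd].
  - fold n. destruct (Nat.ltb_spec n (tri (S (x + y)))). reflexivity. simpl in *. lia.
  - intros m Hm. fold n. destruct (Nat.ltb_spec n (tri (S m))); simpl; try lia.
    pose proof (tri_mono (S m) (x+y) Hm). lia.
Qed.
Ltac b6 := first [ apply rep_DIAG | b5 ].
Lemma rep_CY o : rep o CY (fun xs => snd (of_nat (nth 0 xs 0))).
Proof. eapply rep_ext. unfold CY; repeat b6. intros xs; cbn [map nth hd].
  pose proof (of_nat_eq (nth 0 xs 0)). lia. Qed.
Ltac b7 := first [ apply rep_CY | b6 ].
Lemma rep_CX o : rep o CX (fun xs => fst (of_nat (nth 0 xs 0))).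
Proof. eapply rep_ext. unfold CX; repeat b7. intros xs; cbn [map nth hd]. lia. Qed.
Ltac b8 := first [ apply rep_CX | b7 ].
Definition app1 e a := PComp e [a].
Definition app2 e a b := PComp e [a; b].
Definition A1 := app1 CX (PProj 0).
Definition B1 := app1 CY (PProj 0).
Definition A2 := app1 CX (PProj 1).
Definition B2 := app1 CY (PProj 1).
Definition E1 := app1 ODD A1.
Definition E2 := app1 ODD A2.
Definition NE e := app2 SUB ONE e.
Definition L1 := app2 LTB (app2 MUL (app1 DIV2 A1) (app1 PSucc B2)) (app2 MUL (app1 DIV2 A2) (app1 PSucc B1)).
Definition L2 := app2 LTB (app2 MUL (app1 DIV2 (app1 PSucc A2)) (app1 PSucc B1)) (app2 MUL (app1 DIV2 (app1 PSucc A1)) (app1 PSucc B2)).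
Definition BIT := app2 ADD (app2 ADD (app2 MUL (app2 MUL (NE E1) (NE E2)) L1) (app2 MUL E1 (NE E2))) (app2 MUL (app2 MUL E1 E2) L2).

Definition bitq (i j : nat) : nat := if Qlt_le_dec (qval i) (qval j) then 1 else 0.

Lemma bit_formula a1 b1 a2 b2 :
  (1 - (if Nat.odd a1 then 1 else 0)) * (1 - (if Nat.odd a2 then 1 else 0)) *
  (if Nat.div2 a1 * S b2 <? Nat.div2 a2 * S b1 then 1 else 0) +
  (if Nat.odd a1 then 1 else 0) * (1 - (if Nat.odd a2 then 1 else 0)) +
  (if Nat.odd a1 then 1 else 0) * (if Nat.odd a2 then 1 else 0) *
  (if Nat.div2 (S a2) * S b1 <? Nat.div2 (S a1) * S b2 then 1 else 0) =
  (if Qlt_le_dec (Qmake (zdec a1) (Pos.of_succ_nat b1)) (Qmake (zdec a2) (Pos.of_succ_nat b2)) then 1 else 0).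
Proof.
  unfold zdec. rewrite <- !Nat.negb_odd.
  pose proof (Nat.div2_odd a1) as D1. pose proof (Nat.div2_odd a2) as D2.
  pose proof (Nat.div2_odd (S a1)) as D3. pose proof (Nat.div2_odd (S a2)) as D4.
  rewrite Nat.odd_succ, <- Nat.negb_odd in D3, D4.
  remember (Nat.div2 (S a1)) as q1. remember (Nat.div2 (S a2)) as q2.
  remember (Nat.div2 a1) as p1. remember (Nat.div2 a2) as p2.
  destruct (Nat.odd a1), (Nat.odd a2); simpl in *;
  destruct (Qlt_le_dec _ _) as [H|H]; unfold Qlt, Qle in H; simpl in H;
  rewrite ?Zpos_P_of_succ_nat in H;
  try (destruct (Nat.ltb_spec (p1 * S b2) (p2 * S b1)));
  try (destruct (Nat.ltb_spec (q2 * S b1) (q1 * S b2)));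
  simpl; nia.
Qed.

Lemma rep_BIT o : rep o BIT (fun xs => bitq (nth 0 xs 0) (nth 1 xs 0)).
Proof. eapply rep_ext. unfold BIT, NE, E1, E2, L1, L2, A1, A2, B1, B2, app1, app2; repeat b8.
  intros xs; cbn [map nth hd]. rewrite bit_formula. reflexivity. Qed.
Ltac b9 := first [ apply rep_BIT | b8 ].
Lemma bitq_spec i j : (bitq i j = 1 /\ qlt i j) \/ (bitq i j = 0 /\ ~ qlt i j).
Proof. unfold bitq, qlt. destruct (Qlt_le_dec _ _) as [H|H]; [left|right]; split; auto.
  apply Qle_not_lt; auto. Qed.
Definition GPROG := app2 ADD (app2 ADD POracle POracle) (app2 BIT (app1 CX (PProj 0)) (app1 CY (PProj 0))).
Definition gof (f : nat -> nat -> nat) i j := 2 * f i j + bitq i j.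
Lemma GPROG_ok f : computes (oracle2 f) (oracle2 (gof f)).
Proof. exists GPROG. intros n. 
  assert (R : rep (oracle2 f) GPROG (fun xs => oracle2 (gof f) (nth 0 xs 0))).
  { eapply rep_ext. unfold GPROG, app1, app2; repeat b9.
    intros xs; cbn [map nth hd]. unfold oracle2, gof. destruct xs; simpl; lia. }
  apply (R [n]). Qed.
Lemma minimal_ex (R : nat -> nat -> Prop) (P : nat -> Prop)
  (Rtr : forall a b c, R a b -> R b c -> R a c) (Rirr : forall a, ~ R a a) N :
  (exists y, y <= N /\ P y) ->
  exists y0, y0 <= N /\ P y0 /\ forall y, y <= N -> P y -> ~ R y y0.
Proof.
  induction N as [|N IH]; intros [y [Hy Py]].
  - assert (y = 0) by lia; subst. exists 0; repeat split; auto.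
    intros y' Hy' _. assert (y' = 0) by lia; subst; auto.
  - destruct (classic (exists y, y <= N /\ P y)) as [E|E].
    + destruct (IH E) as [y0 [H1 [H2 H3]]].
      destruct (classic (P (S N) /\ R (S N) y0)) as [[PS RS]|C].
      * exists (S N); repeat split; auto. intros y' Hy' Py' Ry'.
        destruct (Nat.eq_dec y' (S N)) as [->|Ne]. apply (Rirr _ Ry').
        apply (H3 y'); [lia|auto|]. eauto.
      * exists y0; repeat split; auto. intros y' Hy' Py' Ry'.
        destruct (Nat.eq_dec y' (S N)) as [->|Ne]. apply C; auto.
        apply (H3 y'); [lia|auto|auto].
    + assert (y = S N). { destruct (Nat.eq_dec y (S N)); auto. exfalso; apply E; exists y; split; auto; lia. }
      subst. exists (S N); repeat split; auto. intros y' Hy' Py' Ry'.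
      destruct (Nat.eq_dec y' (S N)) as [->|Ne]. apply (Rirr _ Ry').
      apply E; exists y'; split; auto; lia.
Qed.

Lemma far_exists (R : nat -> nat -> Prop) (S : nat -> bool)
  (Rtr : forall a b c, R a b -> R b c -> R a c) (Rirr : forall a, ~ R a a)
  (dens : forall i j, S i = true -> S j = true -> R i j -> exists m, S m = true /\ R i m /\ R m j)
  (ends : forall i, S i = true -> exists b, S b = true /\ R i b) r N :
  S r = true -> exists y, N < y /\ S y = true /\ R r y.
Proof.
  intros Sr. apply NNPP; intros C.
  assert (C' : forall y, S y = true -> R r y -> y <= N).
  { intros y Sy Ry. apply Nat.nlt_ge; intros Hl; apply C; eauto. }
  destruct (ends r Sr) as [b [Sb Rb]].
  destruct (minimal_ex R (fun y => S y = true /\ R r y) Rtr Rirr N) as [y0 [H1 [[S0 R0] H3]]].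
  { exists b; split; auto. }
  destruct (dens r y0 Sr S0 R0) as [m [Sm [Rm1 Rm2]]].
  apply (H3 m); auto.
Qed.

Lemma qlt_trans a b c : qlt a b -> qlt b c -> qlt a c.
Proof. unfold qlt; apply Qlt_trans. Qed.
Lemma qlt_irr a : ~ qlt a a.
Proof. unfold qlt; apply Qlt_irrefl. Qed.

Lemma far_dir (S : nat -> bool) (dir : bool) : dense_no_endpoints S ->
  forall r, S r = true -> exists y, r < y /\ S y = true /\
    (if dir then qlt r y else qlt y r).
Proof.
  intros [_ [_ [D E]]] r Sr. destruct dir.
  - apply (far_exists qlt S qlt_trans qlt_irr); auto.
    intros i Si. destruct (E i Si) as [a [b [_ [Sb [_ H]]]]]; eauto.
  - apply (far_exists (fun a b => qlt b a) S); auto.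
    + intros a b c H1 H2; eapply qlt_trans; eauto.
    + apply qlt_irr.
    + intros i j Si Sj H. destruct (D j i Sj Si H) as [m [Sm [H1 H2]]]; eauto.
    + intros i Si. destruct (E i Si) as [a [b [Sa [_ [H _]]]]]; eauto.
Qed.

Lemma join_odd X Y a : join X Y (S (a + a)) = Y a.
Proof. unfold join. replace (S (a + a)) with (1 + 2 * a) by lia.
  rewrite Nat.even_add_mul_2. simpl Nat.even. cbv iota. f_equal.
  pose proof (Nat.div2_odd (1 + 2 * a)) as H.
  rewrite Nat.odd_add_mul_2 in H. simpl Nat.odd in H. simpl Nat.b2n in H. lia. Qed.
Definition INS a := app1 POracle (app1 PSucc (app2 ADD a a)).
Definition BASEH := PMu (app2 SUB ONE (INS (PProj 0))).
Definition BITd (dir : bool) := if dir then app2 BIT (PProj 2) (PProj 0) else app2 BIT (PProj 0) (PProj 2).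
Lemma rep_BITd o dir : rep o (BITd dir) (fun xs => if dir then bitq (nth 2 xs 0) (nth 0 xs 0) else bitq (nth 0 xs 0) (nth 2 xs 0)).
Proof. destruct dir; (eapply rep_ext; [unfold BITd, app2; repeat b9|]); intros xs; reflexivity. Qed.
Ltac b10 := first [ apply rep_BITd | b9 | eapply rep_mu ].
Definition STEPH dir := PMu (app2 MUL (INS (PProj 2)) (app2 SUB ONE (app2 MUL (app2 LTB (PProj 2) (PProj 0)) (app2 MUL (INS (PProj 0)) (BITd dir))))).
Definition HPROG dir := app1 (PPrim BASEH (STEPH dir)) (PProj 0).

Definition BODYB := app2 SUB ONE (INS (PProj 0)).
Definition BODYS dir := app2 MUL (INS (PProj 2)) (app2 SUB ONE (app2 MUL (app2 LTB (PProj 2) (PProj 0)) (app2 MUL (INS (PProj 0)) (BITd dir)))).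
Definition FB (S : nat -> bool) xs := 1 - chi S (nth 0 xs 0).
Definition FS (S : nat -> bool) (dir : bool) xs := chi S (nth 2 xs 0) * (1 - (if nth 2 xs 0 <? nth 0 xs 0 then 1 else 0) *
   (chi S (nth 0 xs 0) * (if dir then bitq (nth 2 xs 0) (nth 0 xs 0) else bitq (nth 0 xs 0) (nth 2 xs 0)))).
Lemma rep_BODYB f S : rep (join (oracle2 f) (chi S)) BODYB (FB S).
Proof. eapply rep_ext. unfold BODYB, INS, app1, app2; repeat b10. intros xs; cbn [map nth hd].
  rewrite join_odd. reflexivity. Qed.
Lemma rep_BODYS f S dir : rep (join (oracle2 f) (chi S)) (BODYS dir) (FS S dir).
Proof. eapply rep_ext. unfold BODYS, INS, app1, app2; repeat b10. intros xs; cbn [map nth hd].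
  rewrite !join_odd. reflexivity. Qed.
Lemma exB S : dense_no_endpoints S -> forall xs, exists n, FB S (n :: xs) = 0.
Proof. intros DS xs. destruct DS as [_ [[i Si] _]]. exists i. unfold FB, chi; simpl; rewrite Si; reflexivity. Qed.
Lemma exS S dir : dense_no_endpoints S -> forall xs, exists n, FS S dir (n :: xs) = 0.
Proof. intros DS xs. unfold FS. change (fun n => nth 2 (n :: xs) 0) with (fun _ : nat => nth 1 xs 0).
  cbn [nth]. set (r := nth 1 xs 0). unfold chi at 1.
  destruct (S r) eqn:Sr; [|exists 0; reflexivity].
  destruct (far_dir S dir DS _ Sr) as [y [Hy [Sy Q]]]. exists y. unfold chi; rewrite Sy.
  destruct (Nat.ltb_spec r y); [|lia].
  assert (B : (if dir then bitq r y else bitq y r) = 1).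
  { destruct dir; [pose proof (bitq_spec r y) as H1|pose proof (bitq_spec y r) as H1]; tauto. }
  rewrite B; reflexivity. Qed.

Definition HPROG2 dir := app1 (PPrim (PMu BODYB) (PMu (BODYS dir))) (PProj 0).
Definition hseq S dir n := primF (muF (FB S)) (muF (FS S dir)) n [].

Lemma rep_HPROG f S dir : dense_no_endpoints S ->
  rep (join (oracle2 f) (chi S)) (HPROG2 dir) (fun xs => hseq S dir (nth 0 xs 0)).
Proof. intros DS. unfold HPROG2, app1. eapply rep_ext.
  eapply rep_compP. apply rep_mu. apply rep_BODYB. apply exB; auto.
  apply rep_mu. apply rep_BODYS. apply exS; auto. apply rep_proj. constructor.
  intros xs; reflexivity. Qed.

Lemma hseq_props S dir : dense_no_endpoints S ->
  forall n, S (hseq S dir n) = true /\ hseq S dir n < hseq S dir (Datatypes.S n) /\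
    (if dir then qlt (hseq S dir n) (hseq S dir (Datatypes.S n)) else qlt (hseq S dir (Datatypes.S n)) (hseq S dir n)).
Proof.
  intros DS.
  assert (Sh : forall n, S (hseq S dir n) = true).
  { induction n.
    - unfold hseq; simpl. destruct (muF_spec (FB S) [] (exB S DS [])) as [H _].
      unfold FB, chi in H; simpl in H. destruct (S _); auto; discriminate.
    - unfold hseq in *; simpl. destruct (muF_spec (FS S dir) _ (exS S dir DS [n; primF (muF (FB S)) (muF (FS S dir)) n []])) as [H _].
      set (y := muF (FS S dir) _) in *. set (r := primF _ _ n []) in *.
      unfold FS, chi in H; cbn [nth] in H. rewrite IHn in H.
      destruct (S y); auto. rewrite Nat.mul_0_l, Nat.mul_0_r in H. lia. }
  intros n. split; auto.
  pose proof (Sh (Datatypes.S n)) as HS.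
  unfold hseq in *; simpl in *. destruct (muF_spec (FS S dir) _ (exS S dir DS [n; primF (muF (FB S)) (muF (FS S dir)) n []])) as [H _].
  set (y := muF (FS S dir) _) in *. set (r := primF _ _ n []) in *.
  assert (Sr : S r = true) by apply (Sh n). assert (Sy : S y = true) by exact HS.
  unfold FS, chi in H; cbn [nth] in H. rewrite Sr, Sy in H.
  destruct (Nat.ltb_spec r y); [|simpl in H; lia]. split; auto.
  destruct dir; [pose proof (bitq_spec r y) as H1|pose proof (bitq_spec y r) as H1]; destruct H1 as [[E1 Q]|[E1 Q]]; auto; rewrite E1 in H; lia.
Qed.
Definition SUMH dir := app2 (PPrim PZero (app2 ADD (PProj 1) (app2 EQB (app1 (HPROG2 dir) (PProj 0)) (PProj 2)))) (app1 PSucc (PProj 0)) (PProj 0).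
Definition CHIH dir := app2 SUB ONE (app2 SUB ONE (SUMH dir)).
Fixpoint cnt (h : nat -> nat) m k := match k with 0 => 0 | Datatypes.S k' => cnt h m k' + (if h k' =? m then 1 else 0) end.
Definition Hb S dir m := 0 <? cnt (hseq S dir) m (Datatypes.S m).

Lemma CHIH_ok f S dir : dense_no_endpoints S -> computes (join (oracle2 f) (chi S)) (chi (Hb S dir)).
Proof. intros DS. exists (CHIH dir). intros n.
  assert (R : rep (join (oracle2 f) (chi S)) (CHIH dir) (fun xs => chi (Hb S dir) (nth 0 xs 0))).
  { eapply rep_ext. unfold CHIH, SUMH, app1, app2.
    repeat (first [apply (rep_HPROG f S dir DS) | b10]).
    intros xs; cbn [map nth hd].
    assert (E : forall k, primF (fun _ => 0) (fun xs0 => nth 1 xs0 0 + (if hseq S dir (nth 0 xs0 0) =? nth 2 xs0 0 then 1 else 0)) k [nth 0 xs 0]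
               = cnt (hseq S dir) (nth 0 xs 0) k).
    { induction k; simpl; auto. }
    cbn beta. rewrite E. unfold chi, Hb. destruct (Nat.ltb_spec 0 (cnt (hseq S dir) (nth 0 xs 0) (Datatypes.S (nth 0 xs 0)))); lia. }
  apply (R [n]). Qed.
Lemma cnt_pos h m k : 0 < cnt h m k <-> exists n, n < k /\ h n = m.
Proof. induction k; simpl.
  - split; [lia|]. intros [n [Hn _]]; lia.
  - destruct (Nat.eqb_spec (h k) m).
    + split; [intros _; exists k; split; auto|intros; lia].
    + rewrite Nat.add_0_r, IHk. split.
      * intros [p [H1 H2]]; exists p; split; auto; lia.
      * intros [p [H1 H2]]; exists p; split; auto.
        destruct (Nat.eq_dec p k); subst; [contradiction|lia].
Qed.

Lemma sol_dir (f : nat -> nat -> nat) (S : nat -> bool) (dir : bool) (cols : list nat) (l : nat) : dense_no_endpoints S ->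
  (forall i j, i < j -> S i = true -> S j = true -> In (gof f i j) cols) ->
  length (filter (fun c => if dir then Nat.odd c else negb (Nat.odd c)) cols) <= l ->
  RT_solution l f (Hb S dir).
Proof.
  intros DS Hc Hl. pose proof (hseq_props S dir DS) as P.
  set (h := hseq S dir) in *.
  assert (Inc : forall n m, n < m -> h n < h m /\ (if dir then qlt (h n) (h m) else qlt (h m) (h n))).
  { intros n m Hnm. induction Hnm.
    - destruct (P n) as [_ [A B]]; auto.
    - destruct (P m) as [_ [A B]]. destruct IHHnm as [C D]. split; [lia|].
      destruct dir; eapply qlt_trans; eauto. }
  assert (Ge : forall n, n <= h n).
  { induction n; [lia|]. destruct (P n) as [_ [A _]]; lia. }
  assert (HbE : forall m, Hb S dir m = true <-> exists n, h n = m).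
  { intros m. unfold Hb. rewrite Nat.ltb_lt, cnt_pos. split.
    - intros [n [_ E]]; eauto.
    - intros [n E]; exists n; split; auto. specialize (Ge n); lia. }
  split.
  - intros N. exists (h N). split; auto. apply HbE; eauto.
  - exists (map Nat.div2 (filter (fun c => if dir then Nat.odd c else negb (Nat.odd c)) cols)).
    split. { rewrite length_map; auto. }
    intros x y Hxy Hx Hy. apply HbE in Hx, Hy. destruct Hx as [n Ex], Hy as [n' Ey]; subst x y.
    assert (Hnn : n < n').
    { destruct (Nat.lt_ge_cases n n') as [?|Hge]; auto.
      destruct (Nat.eq_dec n n'); [subst; lia|]. assert (n' < n) by lia.
      destruct (Inc n' n) as [A _]; auto; lia. }
    destruct (Inc n n' Hnn) as [_ Q].
    assert (Sn : S (h n) = true) by (destruct (P n); tauto).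
    assert (Sn' : S (h n') = true).
    { destruct n'; [lia|]. destruct (P n') as [_ [A B]]. destruct (P (Datatypes.S n')); tauto. }
    pose proof (Hc _ _ Hxy Sn Sn') as Hin.
    assert (Bq : bitq (h n) (h n') = if dir then 1 else 0).
    { destruct dir; destruct (bitq_spec (h n) (h n')) as [[E1 Q1]|[E1 Q1]]; auto.
      - contradiction.
      - exfalso; eapply qlt_irr; eapply qlt_trans; [exact Q1|exact Q]. }
    set (v := gof f (h n) (h n')) in *.
    assert (Odd : Nat.odd v = dir).
    { unfold v, gof. rewrite Bq. rewrite Nat.add_comm, Nat.odd_add_mul_2. destruct dir; reflexivity. }
    apply in_map_iff. exists v. split.
    + pose proof (Nat.div2_odd v) as D. rewrite Odd in D. unfold v, gof in D |- *. rewrite Bq in D.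
      rewrite Bq. destruct dir; simpl in D |- *; lia.
    + apply filter_In. split; auto. rewrite Odd. destruct dir; reflexivity.
Qed.

Theorem theorem5p28 : forall k l : nat, 1 <= k -> 1 <= l ->
  RT_le_c_DT k l (2 * k) (2 * l + 1).
Proof.
  intros k l _ _ f Hf. exists (gof f). split; [|split].
  - intros i j _ _ Hij. unfold gof. specialize (Hf i j Hij).
    assert (bitq i j <= 1) by (unfold bitq; destruct (Qlt_le_dec _ _); lia). lia.
  - apply GPROG_ok.
  - intros S [DS [cols [Hlen Hc]]].
    pose proof (filter_length Nat.odd cols) as FL.
    destruct (Nat.le_gt_cases (length (filter Nat.odd cols)) l) as [Hle|Hgt].
    + exists (Hb S true). split; [|apply CHIH_ok; auto].
      apply (sol_dir f S true cols l DS); auto.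
    + exists (Hb S false). split; [|apply CHIH_ok; auto].
      apply (sol_dir f S false cols l DS); auto. lia.
Qed.
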